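(* Let $\mathbf{k}=\mathbb{R}$ or $\mathbb{C}$, let $(C^\bullet,\partial)$ be a complex of finite-dimensional $\mathbf{k}$-vector spaces of odd length $d=2r-1$ with a chirality operator $\Gamma$, and let $\langle\cdot,\cdot\rangle_j$ be Euclidean (if $\mathbf{k}=\mathbb{R}$) or Hermitian (if $\mathbf{k}=\mathbb{C}$) scalar products on $C^j$, $j=0,\dots,d$, such that $\Gamma$ is self-adjoint. Let $\|\cdot\|_{\operatorname{Det}(H^\bullet(\partial))}$ be the metric on $\operatorname{Det}(H^\bullet(\partial))$ for which $\phi_{C^\bullet}$ is an isometry, where $\operatorname{Det}(C^\bullet)$ carries the metric induced by the scalar products. Then $\|\rho_\Gamma\|_{\operatorname{Det}(H^\bullet(\partial))}=1$.
   Context: Determinant lines: $\operatorname{Det}(V)=\Lambda^{\dim V}V$, $\operatorname{Det}(0)=\mathbf{k}$, $L^{-1}=\operatorname{Hom}(L,\mathbf{k})$, $l^{-1}(l)=1$, $\operatorname{Det}(V^\bullet)=\bigotimes_j\operatorname{Det}(V^j)^{(-1)^j}$; $\mu_{V_1,\dots,V_r}$ is the fusion isomorphism given by concatenating wedges. The isomorphism $\phi_{C^\bullet}:\operatorname{Det}(C^\bullet)\to\operatorname{Det}(H^\bullet(\partial))$: choose $C^j=B^j\oplus H^j\oplus A^j$ with $B^j\oplus H^j=\operatorname{Ker}\partial\cap C^j$, $B^j=\partial(A^{j-1})=\partial(C^{j-1})$, $A^{-1}=A^d=0$; for nonzero $c_j\in\operatorname{Det}(C^j)$, $a_j\in\operatorname{Det}(A^j)$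 ($a_{-1}=1$), $h_j\in\operatorname{Det}(H^j)\cong\operatorname{Det}(H^j(\partial))$ is unique with $c_j=\mu_{B^j,H^j,A^j}(\partial(a_{j-1})\otimes h_j\otimes a_j)$; $\phi_{C^\bullet}(c_0\otimes c_1^{-1}\otimes\cdots\otimes c_d^{(-1)^d})=(-1)^{\mathcal N}h_0\otimes h_1^{-1}\otimes\cdots\otimes h_d^{(-1)^d}$, $\mathcal N=\frac12\sum_j\dim A^j(\dim A^j+(-1)^{j+1})$; independent of choices. A chirality operator is an involution $\Gamma:C^\bullet\to C^\bullet$ with $\Gamma(C^j)=C^{d-j}$; $\Gamma c_j\in\operatorname{Det}(C^{d-j})$ denotes the image of $c_j\in\operatorname{Det}(C^j)$. For nonzero $c_j\in\operatorname{Det}(C^j)$, $j=0,\dots,r-1$, put $c_\Gamma=(-1)^{\mathcal R(C^\bullet)}c_0\otimes c_1^{-1}\otimes\cdots\otimes c_{r-1}^{(-1)^{r-1}}\otimes(\Gamma c_{r-1})^{(-1)^r}\otimes(\Gamma c_{r-2})^{(-1)^{r-1}}\otimes\cdots\otimes(\Gamma c_0)^{-1}\in\operatorname{Det}(C^\bullet)$, where $\mathcal R(C^\bullet)=\frac12\sum_{j=0}^{r-1}\dim C^j(\dim C^j+(-1)^{r+j})$; $c_\Gamma$ is independent of the $c_j$. The refined torsion is $\rho_\Gamma:=\phi_{C^\bullet}(c_\Gamma)\in\operatorname{Det}(H^\bullet(\partial))$. *)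

(* Defs.v *)
From mathcomp Require Import all_boot all_order all_algebra.
From mathcomp Require Import reals complex.
Set Implicit Arguments. Unset Strict Implicit. Unset Printing Implicit Defensive.
Import GRing.Theory Num.Theory.
Local Open Scope ring_scope.

(* kfield R false = R (Euclidean case), kfield R true = R[i] (Hermitian case) *)
Definition kfield (R : realType) (iscomplex : bool) : numFieldType :=
  if iscomplex then (R[i] : numFieldType) else (R : numFieldType).

Definition kconj (R : realType) (iscomplex : bool) :
    kfield R iscomplex -> kfield R iscomplex :=
  match iscomplex with
  | true => fun x : R[i] => Num.conj x
  | false => id
  end.

(** * Finite-dimensional spaces are k^m, vectors are row vectors 'rV_m. *)

Definition rows (K : Type) (p m : nat) (A : 'M[K]_(p, m)) : seq 'rV[K]_m :=
  [seq row i A | i <- enum 'I_p].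

Definition mx_of_rows (K : nmodType) (m : nat) (s : seq 'rV[K]_m) :
    'M[K]_(size s, m) := \matrix_(i < size s) nth 0 s i.

(* Det(k^m) = Lambda^m k^m is identified with k through its canonical
   generator e_1 /\ ... /\ e_m.  For vectors v_1,...,v_m of k^m,
   v_1 /\ ... /\ v_m = (wedge_coef [:: v_1; ...; v_m]) * (e_1 /\ ... /\ e_m). *)
Definition wedge_coef (K : comNzRingType) (m : nat) (s : seq 'rV[K]_m) : K :=
  if size s == m then \det (\matrix_(i < m, j < m) (nth 0 s i) 0 j) else 0.

(** * Scalar products.  A sesquilinear form on k^m is given by its Gram
    matrix G: <u, v> = u G v^*T (linear in u, conjugate-linear in v). *)
Definition sprod (R : realType) (b : bool) (m : nat)
    (G : 'M[kfield R b]_m) (u v : 'rV[kfield R b]_m) : kfield R b :=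
  (u *m G *m (map_mx (@kconj R b) v)^T) 0 0.

Definition is_scalar_product (R : realType) (b : bool) (m : nat)
    (G : 'M[kfield R b]_m) : Prop :=
  (forall u v, sprod G v u = kconj (sprod G u v)) /\
  (forall u, u != 0 -> 0 < sprod G u u).

Definition pw (K : fieldType) (j : nat) (x : K) : K :=
  if odd j then x^-1 else x.

(** * The complex (C^j, d_j), j = 0..d, with C^j = k^(n j);
    the differential d_j : C^j -> C^(j+1) acts on row vectors by v |-> v *m D j. *)

Definition imD (K : fieldType) (n : nat -> nat)
    (D : forall j, 'M[K]_(n j, n j.+1)) (j : nat) : 'M[K]_(n j.-1, n j) :=
  match j as j' return 'M[K]_(n j'.-1, n j') with
  | 0 => 0
  | i.+1 => D i
  end.

(* b is a family of vectors of Ker d_j whose classes form a basis of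
   H^j(d) = Ker d_j / Im d_{j-1} *)
Definition is_cohom_basis (K : fieldType) (n : nat -> nat)
    (D : forall j, 'M[K]_(n j, n j.+1)) (j : nat) (b : seq 'rV[K]_(n j)) : bool :=
  [&& (mx_of_rows b <= kermx (D j))%MS,
      (kermx (D j) <= mx_of_rows b + imD D j)%MS &
      (size b + \rank (imD D j) == \rank (kermx (D j)))%N].

Arguments is_cohom_basis {K n} D j b.
Arguments imD {K n} D j.

(* chosen complement A^j of Ker d_j in C^j, given by a basis *)
Definition Abasis (K : fieldType) (n : nat -> nat)
    (D : forall j, 'M[K]_(n j, n j.+1)) (j : nat) : seq 'rV[K]_(n j) :=
  rows (row_base ((kermx (D j))^C)%MS).

Arguments Abasis {K n} D j.

(* basis of B^j = d(A^{j-1}) (empty for j = 0, since A^{-1} = 0) *)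
Definition Bbasis (K : fieldType) (n : nat -> nat)
    (D : forall j, 'M[K]_(n j, n j.+1)) (j : nat) : seq 'rV[K]_(n j) :=
  match j as j' return seq 'rV[K]_(n j') with
  | 0 => [::]
  | i.+1 => [seq v *m D i | v <- Abasis D i]
  end.

Arguments Bbasis {K n} D j.

(* Det(C^.) = (x) Det(C^j)^((-1)^j) is identified with k via the generator
   e^0 (x) (e^1)^-1 (x) e^2 (x) ... , e^j = canonical generator of Det(C^j). *)
Definition DetC (K : numFieldType) := K.

(* tensor product c_0 (x) c_1^-1 (x) ... (x) c_d^((-1)^d) of c_j = x_j e^j *)
Definition det_tensor (K : numFieldType) (d : nat) (x : nat -> K) : DetC K :=
  \prod_(j < d.+1) pw j (x j).

(* metric on Det(C^.) induced by the scalar products (given by Gram matrices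
   G j); we use squared norms: ||v_1/\.../\v_m||^2 = det(<v_a,v_b>), the norm
   on an inverse line is the dual norm and norms multiply on tensor products. *)
Definition DetC_normsq (R : realType) (b : bool) (n : nat -> nat) (d : nat)
    (G : forall j, 'M[kfield R b]_(n j)) (x : DetC (kfield R b)) : kfield R b :=
  `|x| ^+ 2 * \prod_(j < d.+1) pw j (\det (G j)).

(* Det(H^.(d)) = (x) Det(H^j(d))^((-1)^j).  A vector of this line is
   represented by its coordinate function: to each family (b_j)_j where b_j
   represents a basis of H^j(d) it associates the scalar f(b) such that the
   vector equals f(b) . h_0 (x) h_1^-1 (x) ... with h_j = wedge of the classes
   of b_j.  (Values on non-bases are irrelevant.) *)
Definition DetH (K : numFieldType) (n : nat -> nat) :=
  (forall j, seq 'rV[K]_(n j)) -> K.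

(* For a family of bases b_j of H^j(d) we take H^j := span b_j,
   A^j := Abasis, B^j = d(A^{j-1}) (basis Bbasis), c_j := e^j, a_j := wedge of
   Abasis j.  Then e^j = mu(d(a_{j-1}) (x) h_j (x) a_j) with
   h_j = (wedge_coef (Bbasis ++ b_j ++ Abasis))^-1 . (wedge of b_j). *)
Definition N_exp (K : fieldType) (n : nat -> nat)
    (D : forall j, 'M[K]_(n j, n j.+1)) (d : nat) : nat :=
  \sum_(j < d.+1)
     let a := size (Abasis D j) in if odd j then 'C(a.+1, 2) else 'C(a, 2).

Definition phiC (K : numFieldType) (n : nat -> nat) (d : nat)
    (D : forall j, 'M[K]_(n j, n j.+1)) (x : DetC K) : DetH K n :=
  fun b =>
    if [forall j : 'I_d.+1, is_cohom_basis D j (b j)] then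
      (-1) ^+ N_exp D d * x *
      \prod_(j < d.+1) pw j (wedge_coef (Bbasis D j ++ b j ++ Abasis D j))^-1
    else 0.

(** * Chirality operator: Gam i j : C^i -> C^j is the (i,j) block of the
    operator Gamma on C^. = (+)_j C^j (acting on row vectors). *)
Definition is_chirality (K : numFieldType) (n : nat -> nat) (d : nat)
    (Gam : forall i j, 'M[K]_(n i, n j)) : Prop :=
  (forall i j, (i + j != d)%N -> Gam i j = 0) /\
  (forall i j, (i + j = d)%N -> Gam i j *m Gam j i = 1%:M).

(* exponent R(C^.) = 1/2 sum_{j<r} dim C^j (dim C^j + (-1)^(r+j)) *)
Definition R_exp (n : nat -> nat) (r : nat) : nat :=
  \sum_(j < r) (if odd (r + j) then 'C(n j, 2) else 'C((n j).+1, 2)).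

(* c_Gamma = (-1)^R c_0 (x) c_1^-1 (x) ... (x) c_{r-1}^((-1)^(r-1))
     (x) (Gam c_{r-1})^((-1)^r) (x) ... (x) (Gam c_0)^-1,
   for c_j = x_j e^j (j < r); Gam c_j = x_j (Gam e_1 /\ ... /\ Gam e_m)
   lies in Det(C^(d-j)), d = 2r-1. *)
Definition cGamma (K : numFieldType) (n : nat -> nat) (r : nat)
    (Gam : forall i j, 'M[K]_(n i, n j)) (c : nat -> K) : DetC K :=
  let d := (2 * r)%N.-1 in
  (-1) ^+ R_exp n r *
  det_tensor d (fun j => if (j < r)%N then c j
                         else c (d - j)%N * wedge_coef (rows (Gam (d - j)%N j))).

Definition refined_torsion (K : numFieldType) (n : nat -> nat) (r : nat)
    (D : forall j, 'M[K]_(n j, n j.+1)) (Gam : forall i j, 'M[K]_(n i, n j))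
    (c : nat -> K) : DetH K n :=
  phiC (2 * r)%N.-1 D (cGamma r Gam c).

(* Main.v *)
Require Import Defs.
From mathcomp Require Import all_boot all_order all_algebra.
From mathcomp Require Import reals complex.
From mathcomp Require Import ring zify.
Import Order.TTheory GRing.Theory Num.Theory.
Local Open Scope ring_scope.
Section S. Variable R : realType.

Lemma kconj_det b m (A : 'M[kfield R b]_m) :
  \det (map_mx (@kconj R b) A) = kconj (\det A).
Proof.
case: b A => A /=; first exact: (det_map_mx Num.conj_op A).
by rewrite map_mx_id.
Qed.

Lemma kconj_norm b (x : kfield R b) : `|x| ^+ 2 = x * kconj x.
Proof. case: b x => x /=; first exact: normCK. by rewrite -expr2 real_normK ?num_real. Qed.

Lemma kconj0 b : kconj (0 : kfield R b) = 0.
Proof. by case: b => /=; rewrite ?conjC0. Qed.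
Lemma kconj1 b : kconj (1 : kfield R b) = 1.
Proof. by case: b => /=; rewrite ?conjC1. Qed.
Lemma kconjM b (x y : kfield R b) : kconj (x * y) = kconj x * kconj y.
Proof. by case: b x y => x y /=; rewrite ?rmorphM. Qed.

Lemma sq_eq (K : fieldType) m p (A : 'M[K]_(m,p)) B :
  A *m B = 1%:M -> B *m A = 1%:M -> m = p.
Proof.
move=> h1 h2; apply/eqP; rewrite eqn_leq.
have := mxrankM_maxl A B; rewrite h1 mxrank1 => /leq_trans -> //; last exact: rank_leq_col.
have := mxrankM_maxl B A; rewrite h2 mxrank1 => /leq_trans -> //; exact: rank_leq_col.
Qed.

Lemma sprod_mx b m p (A : 'M[kfield R b]_(m,p)) (B : 'M_(p,m)) Gi Gj :
  (forall u v, sprod Gj (u *m A) v = sprod Gi u (v *m B)) ->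
  A *m Gj = Gi *m (map_mx (@kconj R b) B)^T.
Proof.
move=> H; apply/matrixP => a b'.
have := H (delta_mx 0 a) (delta_mx 0 b'); rewrite /sprod -!rowE.
have -> : map_mx (@kconj R b) (delta_mx 0 b' : 'rV_p) = delta_mx 0 b'.
  apply/matrixP => i j; rewrite !mxE; case: (_ && _); by rewrite ?kconj0 ?kconj1.
have -> : map_mx (@kconj R b) (row b' B) = row b' (map_mx (@kconj R b) B).
  by apply/matrixP => i j; rewrite !mxE.
rewrite trmx_delta -colE -row_mul mxE.
have E : forall (X : 'M[kfield R b]_(m,p)), row a X 0 b' = X a b' by move=> X; rewrite mxE.
rewrite E => ->; rewrite !mxE; apply: eq_bigr => k _; by rewrite !mxE.
Qed.

Lemma pair_det b m p (A : 'M[kfield R b]_(m,p)) (B : 'M_(p,m)) Gi Gj :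
  A *m B = 1%:M -> B *m A = 1%:M ->
  (forall u v, sprod Gj (u *m A) v = sprod Gi u (v *m B)) ->
  \det Gi = `|wedge_coef (rows A)| ^+ 2 * \det Gj /\ wedge_coef (rows A) != 0.
Proof.
move=> hAB hBA hs; have hmx := @sprod_mx _ _ _ _ _ _ _ hs.
have emp := @sq_eq _ _ _ _ _ hAB hBA; subst p.
have wA : wedge_coef (rows A) = \det A.
  rewrite /wedge_coef /rows size_map size_enum_ord eqxx; congr (\det _).
  apply/matrixP => i j; rewrite !mxE (nth_map i) ?size_enum_ord // nth_ord_enum mxE.
  by [].
rewrite wA.
have dAB : \det A * \det B = 1 by rewrite -det_mulmx hAB det1.
have := congr1 determinant hmx; rewrite !det_mulmx det_tr kconj_det => h.
split.
  by rewrite kconj_norm -mulrA mulrCA h mulrCA -kconjM dAB kconj1 mulr1.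
apply/eqP => h0; move: dAB; rewrite h0 mul0r => /eqP; by rewrite eq_sym oner_eq0.
Qed.

Lemma detG_neq0 b m (G : 'M[kfield R b]_m) : is_scalar_product G -> \det G != 0.
Proof.
case=> _ hpos; apply/negP => /det0P [v vn0 vG].
by have := hpos v vn0; rewrite /sprod vG mul0mx mxE ltxx.
Qed.
End S.

Lemma pair_val (K : numFieldType) (i j : nat) (c w gi gj : K) :
  odd j = ~~ odd i -> c != 0 -> w != 0 -> gj != 0 -> gi = `|w| ^+ 2 * gj ->
  (`|pw i c| ^+ 2 * pw i gi) * (`|pw j (c * w)| ^+ 2 * pw j gj) = 1.
Proof.
move=> hj hc hw hg ->; rewrite /pw hj.
have hc' : `|c| != 0 by rewrite normr_eq0.
have hw' : `|w| != 0 by rewrite normr_eq0.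
case: (odd i) => /=; rewrite ?normrV ?normrM ?unitfE ?mulf_neq0 //; move: (`|c|) (`|w|) hc' hw' hg => x y hx hy hg; field.
all: by rewrite hx hy hg.
Qed.

Theorem lemma4p3 (R : realType) (iscomplex : bool) (r : nat) (n : nat -> nat)
    (D : forall j, 'M[kfield R iscomplex]_(n j, n j.+1))
    (Gam : forall i j, 'M[kfield R iscomplex]_(n i, n j))
    (G : forall j, 'M[kfield R iscomplex]_(n j))
    (c : nat -> kfield R iscomplex)
    (normsqH : DetH (kfield R iscomplex) n -> kfield R iscomplex) :
  (* odd length d = 2r - 1 *)
  (0 < r)%N ->
  (* C^j = 0 for j > d *)
  (forall j, ((2 * r)%N.-1 < j)%N -> n j = 0%N) ->
  (* (C^., D) is a complex *)
  (forall j, D j *m D j.+1 = 0) ->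
  (* Gam is a chirality operator *)
  is_chirality (2 * r)%N.-1 Gam ->
  (* Euclidean / Hermitian scalar products on each C^j *)
  (forall j, is_scalar_product (G j)) ->
  (* Gam is self-adjoint for the (orthogonal sum of the) scalar products *)
  (forall i j (u : 'rV_(n i)) (v : 'rV_(n j)),
      sprod (G j) (u *m Gam i j) v = sprod (G i) u (v *m Gam j i)) ->
  (* nonzero c_j in Det(C^j), j = 0..r-1 *)
  (forall j, (j < r)%N -> c j != 0) ->
  (* the metric on Det(H^.(D)) makes phi_{C^.} an isometry *)
  (forall x, normsqH (phiC (2 * r)%N.-1 D x)
             = DetC_normsq (2 * r)%N.-1 G x) ->
  normsqH (refined_torsion r D Gam c) = 1.
Proof.
move=> r0 hn hD [hz hinv] hsp hsa hc hiso.
rewrite /refined_torsion hiso /DetC_normsq /cGamma /det_tensor.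
set d := (2 * r).-1.
have hd : d.+1 = (r + r)%N by rewrite /d; lia.
rewrite normrM normrX normrN1 expr1n mul1r normr_prod -prodrXl -big_split /=.
rewrite hd big_split_ord /=.
rewrite [X in _ * X](reindex_inj rev_ord_inj) /= -big_split big1 //= => i _.
have hir := ltn_ord i.
have e1 : (r + (r - i.+1) = d - i)%N by rewrite /d; lia.
rewrite e1 hir.
have e2 : (d - (d - i) = i)%N by rewrite /d; lia.
have e3 : (d - i < r)%N = false by apply/negbTE; rewrite -leqNgt /d; lia.
rewrite e2 e3.
have hodd : odd d by rewrite (_ : d = (2 * r.-1).+1) /= ?oddM //; rewrite /d; lia.
have [hdet hw] := @pair_det _ _ _ _ _ _ _ _ (hinv i (d - i)%N ltac:(rewrite /d; lia))
   (hinv (d - i)%N i ltac:(rewrite /d; lia)) (hsa i (d - i)%N).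
apply: pair_val => //.
- by rewrite oddB ?hodd //; rewrite /d; lia.
- by apply: hc.
- by apply: detG_neq0.
Qed.
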